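(* (Weak duality.) Let $h\in\mathcal{M}_{\mathbb{F}}(0)$. Then for all $x\in\mathbb{R}^n$, \[ \sup_{\mathbf{u}\in\mathcal{U}_{\mathbb{F}}(0)} J(0,x;\mathbf{u})\;\le\;\mathbb{E}_{0,x}\Big[\sup_{\mathbf{u}\in\mathcal{U}(0)}\Big\{\Lambda(x_T)+\int_0^T g(t,x_t,u_t)\,dt-h(\mathbf{u},\mathbf{w})\Big\}\Big]. \]
   Context: Let $(\Omega,\mathcal{F},\mathbb{P})$ carry an $m$-dimensional Brownian motion $\mathbf{w}=(w_t)_{t\in[0,T]}$ with natural augmented filtration $\mathbb{F}=\{\mathcal{F}_t\}$, $\mathcal{F}=\mathcal{F}_T$. The controlled state $x_t\in\mathbb{R}^n$ follows $dx_t=b(t,x_t,u_t)\,dt+\sigma(t,x_t)\,dw_t$, $0\le t\le T$, where $u_t\in\mathcal{U}\subset\mathbb{R}^{d_u}$, $b:[0,T]\times\mathbb{R}^n\times\mathcal{U}\to\mathbb{R}^n$, $\sigma:[0,T]\times\mathbb{R}^n\to\mathbb{R}^{n\times m}$ are continuous, with $\|b(t,x,u)\|+\|\sigma(t,x)\|\le C_1(1+\|x\|+\|u\|)$ and $b,\sigma$ Lipschitz in $(t,x)$ uniformly in $u$. The set $\mathcal{U}_{\mathbb{F}}(t)$ of admissible strategies at time $t$ consists of $\mathbb{F}$-progressively measurable $\mathcal{U}$-valued processes $\mathbf{u}=(u_s)_{s\in[t,T]}$ with $\mathbb{E}[\int_t^T\|u_s\|^2ds]<\infty$ and $\mathbb{E}_{t,x}[\sup_{s\in[t,T]}\|x_s\|^2]<\infty$,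 where $\mathbb{E}_{t,x}[\cdot]=\mathbb{E}[\cdot\mid x_t=x]$. The set $\mathcal{U}(t)$ consists of all $\mathcal{B}([t,T])\times\mathcal{F}$-measurable $\mathcal{U}$-valued processes $(u_s)_{s\in[t,T]}$ (possibly anticipative). It is assumed that for each $\mathbf{u}\in\mathcal{U}(0)$ and initial condition $x_0=x$ the state equation has a unique $\mathcal{B}([0,T])\times\mathcal{F}$-measurable solution $(x_t)$, coinciding with the usual Itô solution when $\mathbf{u}\in\mathcal{U}_{\mathbb{F}}(0)$. Rewards $\Lambda:\mathbb{R}^n\to\mathbb{R}$, $g:[0,T]\times\mathbb{R}^n\times\mathcal{U}\to\mathbb{R}$ satisfy polynomial growth: $|\Lambda(x)|\le C_\Lambda(1+\|x\|^{c_\Lambda})$, $|g(t,x,u)|\le C_g(1+\|x\|^{c_g}+\|u\|^{c_g})$. $J(t,x;\mathbf{u})=\mathbb{E}_{t,x}[\Lambda(x_T)+\int_t^T g(s,x_s,u_s)ds]$. The set $\mathcal{M}_{\mathbb{F}}(0)$ of dual feasible penalties consists of functions $h(\mathbf{u},\mathbf{w})$ of a control strategy $\mathbf{u}\in\mathcal{U}(0)$ and a Brownian path $\mathbf{w}$ such that $\mathbb{E}_{0,x}[h(\mathbf{u},\mathbf{w})]\le 0$ for all $x\in\mathbb{R}^n$ and all $\mathbf{u}\in\mathcal{U}_{\mathbb{F}}(0)$. *)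

(* Defs.v *)
From HB Require Import structures.
From mathcomp Require Import all_boot all_order all_algebra.
From mathcomp Require Import all_classical all_reals all_analysis.
Set Implicit Arguments. Unset Strict Implicit. Unset Printing Implicit Defensive.
Import Order.TTheory GRing.Theory Num.Theory numFieldTopology.Exports numFieldNormedType.Exports.
Local Open Scope classical_set_scope.
Local Open Scope ring_scope.

Section Defs.
Context {R : realType}.

Definition sqnorm (k : nat) (v : 'rV[R]_k) : R := \sum_(i < k) (v ord0 i) ^+ 2.
Definition vnorm (k : nat) (v : 'rV[R]_k) : R := Num.sqrt (sqnorm v).

Definition borel_rV (k : nat) : set (set 'rV[R]_k) :=
  <<s [set A | exists (i : 'I_k) (B : set R), measurable B /\
                 A = (fun v : 'rV[R]_k => v ord0 i) @^-1` B] >>.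

Definition borel_trip (n du : nat) : set (set (R * ('rV[R]_n * 'rV[R]_du))) :=
  <<s [set A | exists B : set R, measurable B /\
          (A = (fun p : R * ('rV[R]_n * 'rV[R]_du) => p.1) @^-1` B
           \/ (exists i : 'I_n, A = (fun p : R * ('rV[R]_n * 'rV[R]_du) => p.2.1 ord0 i) @^-1` B)
           \/ (exists j : 'I_du, A = (fun p : R * ('rV[R]_n * 'rV[R]_du) => p.2.2 ord0 j) @^-1` B))] >>.

Definition tint (T : R) : set R := `[0, T].

Context {d : measure_display} {Omega : measurableType d}.

Definition indep_family (P : probability Omega R) (I : finType) (Y : I -> Omega -> R) :=
  (forall k, measurable_fun setT (Y k)) /\
  forall B : I -> set R, (forall k, measurable (B k)) ->
    P (\bigcap_(k in [set: I]) (Y k @^-1` B k)) = (\prod_(k : I) P (Y k @^-1` B k))%E.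

Definition brownian_motion (P : probability Omega R) (m : nat) (T : R)
    (w : R -> Omega -> 'rV[R]_m) :=
  (forall om, w 0 om = 0) /\
  (forall om (j : 'I_m), {within `[0, T], continuous (fun t : R => w t om ord0 j : R)}) /\
  forall (K : nat) (tt : 'I_K.+1 -> R),
    0 <= tt ord0 -> tt ord_max <= T ->
    (forall i : 'I_K, tt (widen_ord (leqnSn K) i) < tt (lift ord0 i)) ->
    let Y (p : 'I_K * 'I_m) (om : Omega) :=
      w (tt (lift ord0 p.1)) om ord0 p.2 - w (tt (widen_ord (leqnSn K) p.1)) om ord0 p.2 in
    indep_family P Y /\
    forall (p : 'I_K * 'I_m) (B : set R), measurable B ->
      P (Y p @^-1` B) =
      normal_prob 0 (Num.sqrt (tt (lift ord0 p.1) - tt (widen_ord (leqnSn K) p.1))) B.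

Definition Pnull (P : probability Omega R) : set (set Omega) :=
  [set N | exists A, measurable A /\ P A = 0%E /\ N `<=` A].

Definition filt (P : probability Omega R) (m : nat) (w : R -> Omega -> 'rV[R]_m)
    (t : R) : set (set Omega) :=
  <<s [set A | exists (s : R) (j : 'I_m) (B : set R),
          0 <= s <= t /\ measurable B /\ A = (fun om => w s om ord0 j) @^-1` B]
      `|` Pnull P >>.

Definition ctrl (du : nat) := R -> Omega -> 'rV[R]_du.

(** U(0): B([0,T]) x F-measurable, U-valued (possibly anticipative). *)
Definition U0 (du : nat) (T : R) (Uset : set 'rV[R]_du) (u : ctrl du) :=
  (forall t om, 0 <= t <= T -> Uset (u t om)) /\
  forall j : 'I_du,
    measurable_fun (`[0, T] `*` [set: Omega]) (fun p : R * Omega => u p.1 p.2 ord0 j).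

Definition progressive (F : R -> set (set Omega)) (du : nat) (T : R) (u : ctrl du) :=
  forall t, 0 <= t <= T ->
  forall (j : 'I_du) (B : set R), measurable B ->
    <<s `[0, t] `*` [set: Omega],
        [set C | exists (A : set R) (D : set Omega),
                   measurable A /\ A `<=` `[0, t] /\ F t D /\ C = A `*` D] >>
      ((`[0, t] `*` [set: Omega]) `&` (fun p : R * Omega => u p.1 p.2 ord0 j) @^-1` B).

(** U_F(0) for the initial state x (the state map X gives the controlled
    state path of the strategy u started at x_0 = x). *)
Definition UF (P : probability Omega R) (m n du : nat) (T : R)
    (w : R -> Omega -> 'rV[R]_m) (Uset : set 'rV[R]_du)
    (X : 'rV[R]_n -> ctrl du -> R -> Omega -> 'rV[R]_n)
    (x : 'rV[R]_n) (u : ctrl du) :=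
  (forall t om, 0 <= t <= T -> Uset (u t om)) /\
  progressive (filt P w) T u /\
  (\int[P]_om \int[lebesgue_measure]_(s in tint T) (sqnorm (u s om))%:E < +oo)%E /\
  (\int[P]_om ereal_sup [set (sqnorm (X x u s om))%:E | s in tint T] < +oo)%E.

Definition reward (n du : nat) (T : R) (Lam : 'rV[R]_n -> R)
    (g : R -> 'rV[R]_n -> 'rV[R]_du -> R)
    (X : 'rV[R]_n -> ctrl du -> R -> Omega -> 'rV[R]_n)
    (x : 'rV[R]_n) (u : ctrl du) (om : Omega) : \bar R :=
  ((Lam (X x u T om))%:E +
   \int[lebesgue_measure]_(t in tint T) (g t (X x u t om) (u t om))%:E)%E.

Definition Jval (P : probability Omega R) (n du : nat) (T : R) (Lam : 'rV[R]_n -> R)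
    (g : R -> 'rV[R]_n -> 'rV[R]_du -> R)
    (X : 'rV[R]_n -> ctrl du -> R -> Omega -> 'rV[R]_n)
    (x : 'rV[R]_n) (u : ctrl du) : \bar R :=
  (\int[P]_om reward T Lam g X x u om)%E.

(** The
    expectation E[h(u,w)] is required to exist (h(u,w) measurable, positive
    part integrable) and be <= 0 for every admissible u and every x. *)
Definition dual_feasible (P : probability Omega R) (m n du : nat) (T : R)
    (w : R -> Omega -> 'rV[R]_m) (Uset : set 'rV[R]_du)
    (X : 'rV[R]_n -> ctrl du -> R -> Omega -> 'rV[R]_n)
    (h : ctrl du -> (R -> 'rV[R]_m) -> R) :=
  forall (x : 'rV[R]_n) (u : ctrl du), UF P T w Uset X x u ->
    measurable_fun [set: Omega] (fun om => h u (fun t => w t om)) /\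
    (\int[P]_om (Num.max (h u (fun t => w t om)) 0)%:E < +oo)%E /\
    (\int[P]_om (h u (fun t => w t om))%:E <= 0)%E.

End Defs.

(* Main.v *)
Require Import Defs.
From HB Require Import structures.
From mathcomp Require Import all_boot all_order all_algebra.
From mathcomp Require Import all_classical all_reals all_analysis.
Import Order.TTheory GRing.Theory Num.Theory.
Local Open Scope classical_set_scope.
From mathcomp Require Import measurable_realfun lra.
Local Open Scope ereal_scope.
Lemma le_nn_any d (T : measurableType d) (R : realType) (mu : measure T R)
  (f g : T -> \bar R) : (forall x, 0 <= f x) -> (forall x, f x <= g x) ->
  \int[mu]_x f x <= \int[mu]_x g x.
Proof.
move=> f0 fg.
have g0 x : 0 <= g x by apply: le_trans (fg x).
rewrite (ge0_integralTE _ f0) (ge0_integralTE _ g0) /=.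
apply: ge_ereal_sup => _ [h hf <-]; apply: ereal_sup_ubound.
by exists h => // x; apply: le_trans (fg x).
Qed.

Lemma le_int_any d (T : measurableType d) (R : realType) (mu : measure T R)
  (f g : T -> \bar R) : (forall x, f x <= g x) ->
  \int[mu]_x f x <= \int[mu]_x g x.
Proof.
move=> fg; rewrite (integralE _ _ f) (integralE _ _ g); apply: leeB.
  apply: le_nn_any => x; first exact: funepos_ge0.
  by apply: (@funepos_le _ _ setT) => //; rewrite inE.
apply: le_nn_any => x; first exact: funeneg_ge0.
by apply: (@funeneg_le _ _ setT) => //; rewrite inE.
Qed.
Lemma maxr0E (R : realDomainType) (x : R) : (Num.max x 0 = x + Num.max (- x) 0)%R.
Proof.
rewrite !maxEle; case: lerP => h1; case: lerP => h2; lra.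
Qed.

Lemma maxeE0 (R : realType) (x : R) : maxe x%:E 0 = (Num.max x 0)%:E.
Proof. by rewrite EFin_max. Qed.

Lemma ptw_id (R : realType) (r : \bar R) (hh : R) :
  maxe r 0 + maxe (- (r - hh%:E)) 0 + (Num.max (- hh) 0)%:E =
  maxe (r - hh%:E) 0 + maxe (- r) 0 + (Num.max hh 0)%:E.
Proof.
case: r => [rr| |] /=.
- rewrite -EFinD !maxeE0 -!EFinD; congr EFin.
  rewrite (maxr0E _ rr) (maxr0E _ (rr - hh)%R) (maxr0E _ hh).
  lra.
- by rewrite !maxEle /= leNye.
- by rewrite !maxEle /= leNye /= add0e.
Qed.

Lemma ptw_le1 (R : realType) (r : \bar R) (hh : R) :
  maxe r 0 <= maxe (r - hh%:E) 0 + (Num.max hh 0)%:E.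
Proof.
case: r => [rr| |] /=.
- rewrite -EFinD !maxeE0 -EFinD lee_fin !maxEle.
  case: (lerP rr 0) => ?; case: (lerP (rr - hh) 0) => ?; case: (lerP hh 0) => ?; lra.
- rewrite /= ?maxye ?addye ?addNye ?maxye /= ?leey //;
  rewrite ge_max leNye /=; apply: adde_ge0; by rewrite ?lee_fin le_max lexx ?orbT.
- rewrite /= ?maxye ?addye ?addNye ?maxye /= ?leey //;
  rewrite ge_max leNye /=; apply: adde_ge0; by rewrite ?lee_fin le_max lexx ?orbT.
Qed.

Lemma ptw_le2 (R : realType) (r : \bar R) (hh : R) :
  maxe (- (r - hh%:E)) 0 <= maxe (- r) 0 + (Num.max hh 0)%:E.
Proof.
case: r => [rr| |] /=.
- rewrite !maxeE0 -EFinD lee_fin !maxEle.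
  case: (lerP (- (rr - hh)) 0) => ?; case: (lerP (- rr) 0) => ?; case: (lerP hh 0) => ?; lra.
- rewrite /= ?maxye ?addye ?addNye ?maxye /= ?leey //;
  rewrite ge_max leNye /=; apply: adde_ge0; by rewrite ?lee_fin le_max lexx ?orbT.
- rewrite /= ?maxye ?addye ?addNye ?maxye /= ?leey //;
  rewrite ge_max leNye /=; apply: adde_ge0; by rewrite ?lee_fin le_max lexx ?orbT.
Qed.
Lemma ext_arith (R : realType) (a b A B e : \bar R) (c : R) :
  0 <= a -> 0 <= b -> 0 <= A -> 0 <= B -> 0 <= e -> (0 <= c)%R ->
  a + B + e = A + b + c%:E -> a <= A + c%:E -> B <= b + c%:E -> c%:E - e <= 0 ->
  a - b <= A - B.
Proof.
case: a => [a| |]; case: b => [b| |]; case: A => [A| |]; case: B => [B| |];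
  case: e => [e| |] //=; rewrite ?lee_fin ?leey ?leNye //.
move=> ? ? ? ? ? ? /eqP; rewrite -!EFinD eqe => /eqP ? ? ? ?; lra.
Qed.

Lemma int3 d (T : measurableType d) (R : realType) (mu : measure T R)
  (f g k : T -> \bar R) :
  (forall x, 0 <= f x) -> (forall x, 0 <= g x) -> (forall x, 0 <= k x) ->
  measurable_fun setT f -> measurable_fun setT g -> measurable_fun setT k ->
  \int[mu]_x (f x + g x + k x) = \int[mu]_x f x + \int[mu]_x g x + \int[mu]_x k x.
Proof.
move=> f0 g0 k0 mf mg mk.
rewrite ge0_integralD //; last 2 first.
  by move=> x _; apply: adde_ge0.
  exact: emeasurable_funD.
by rewrite ge0_integralD.
Qed.

Lemma int_le_sub d (T : measurableType d) (R : realType) (mu : measure T R)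
  (r : T -> \bar R) (hf : T -> R) :
  measurable_fun setT r -> measurable_fun setT hf ->
  \int[mu]_x (Num.max (hf x) 0)%:E < +oo ->
  \int[mu]_x (hf x)%:E <= 0 ->
  \int[mu]_x r x <= \int[mu]_x (r x - (hf x)%:E).
Proof.
move=> mr mh hfin hneg.
set s := fun x => r x - (hf x)%:E.
have mhE : measurable_fun setT (fun x => (hf x)%:E) by apply/measurable_EFinP.
have ms : measurable_fun setT s by apply: emeasurable_funB.
pose hp x := (Num.max (hf x) 0)%:E.
pose hn x := (Num.max (- hf x) 0)%:E.
have mhp : measurable_fun setT hp.
  by apply/measurable_EFinP; apply: (measurable_maxr mh (measurable_cst _)).
have mhn : measurable_fun setT hn.
  apply/measurable_EFinP; apply: (measurable_maxr _ (measurable_cst _)).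
  exact: measurableT_comp.
have hp0 x : 0 <= hp x by rewrite lee_fin le_max lexx orbT.
have hn0 x : 0 <= hn x by rewrite lee_fin le_max lexx orbT.
have mrp := measurable_funepos mr.
have mrn := measurable_funeneg mr.
have msp := measurable_funepos ms.
have msn := measurable_funeneg ms.
have c0 : 0 <= \int[mu]_x hp x by apply: integral_ge0.
have cfin : \int[mu]_x hp x \is a fin_num by rewrite ge0_fin_numE.
have hint : \int[mu]_x (hf x)%:E = \int[mu]_x hp x - \int[mu]_x hn x.
  rewrite integralE; congr (_ - _); apply: eq_integral => x _.
    by rewrite funeposE maxeE0.
  by rewrite funenegE -EFinN maxeE0.
have E1 : \int[mu]_x (r^\+ x + s^\- x + hn x) = \int[mu]_x (s^\+ x + r^\- x + hp x).
  apply: eq_integral => x _; rewrite !funeposE !funenegE; exact: ptw_id.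
rewrite !int3 // in E1; try (move=> x; rewrite ?funepos_ge0 ?funeneg_ge0 //).
have E2 : \int[mu]_x r^\+ x <= \int[mu]_x s^\+ x + \int[mu]_x hp x.
  rewrite -(@ge0_integralD _ _ _ mu setT measurableT _ _ (fun x _ => funepos_ge0 s x) msp (fun x _ => hp0 x) mhp).
  apply: (@ge0_le_integral _ _ _ mu setT measurableT _ _ (fun x _ => funepos_ge0 r x) mrp).
    exact: emeasurable_funD.
  by move=> x _; rewrite !funeposE; exact: ptw_le1.
have E3 : \int[mu]_x s^\- x <= \int[mu]_x r^\- x + \int[mu]_x hp x.
  rewrite -(@ge0_integralD _ _ _ mu setT measurableT _ _ (fun x _ => funeneg_ge0 r x) mrn (fun x _ => hp0 x) mhp).
  apply: (@ge0_le_integral _ _ _ mu setT measurableT _ _ (fun x _ => funeneg_ge0 s x) msn).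
    exact: emeasurable_funD.
  by move=> x _; rewrite !funenegE; exact: ptw_le2.
rewrite integralE [X in _ <= X]integralE.
move: cfin E1 E2 E3 hneg c0; rewrite hint.
case: (\int[mu]_x hp x) => [c| |] //= _ E1 E2 E3 hneg c0.
apply: ext_arith E1 E2 E3 hneg; rewrite ?lee_fin //;
  apply: integral_ge0 => x _; rewrite ?funepos_ge0 ?funeneg_ge0 //.
Qed.
Lemma sigma_pre d (T : measurableType d) (U : Type) (G : set (set U)) (D : set T)
  (Psi : T -> U) : measurable D ->
  (forall A, G A -> measurable (D `&` Psi @^-1` A)) ->
  forall A, <<s G >> A -> measurable (D `&` Psi @^-1` A).
Proof.
move=> mD HG A hA.
apply: (@smallest_sub _ _ _ [set A | measurable (D `&` Psi @^-1` A)] _ HG _ hA).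
split.
- by rewrite /= preimage_set0 setI0.
- move=> B /= mB.
  have -> : D `&` Psi @^-1` (setT `\` B) = D `\` (D `&` Psi @^-1` B).
    apply/seteqP; split => x /=.
      by move=> [Dx [_ nB]]; split => // -[].
    by move=> [Dx H]; split => //; split => // Bx; apply: H.
  exact: measurableD.
- move=> F mF /=.
  have -> : D `&` Psi @^-1` (\bigcup_k F k) = \bigcup_k (D `&` Psi @^-1` F k).
    apply/seteqP; split => x /=.
      by move=> [Dx [k _ Fk]]; exists k.
    by move=> [k _ [Dx Fk]]; split => //; exists k.
  by apply: bigcup_measurable => k _; exact: mF.
Qed.

Lemma sigma_sub d (T : measurableType d) (D : set T) (G : set (set T)) :
  measurable D -> (forall A, G A -> measurable A) ->
  forall A, <<s D, G >> A -> measurable A.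
Proof.
move=> mD HG A hA.
apply: (@smallest_sub _ _ _ (@measurable _ T) _ HG _ hA).
split.
- exact: measurable0.
- by move=> B mB; exact: measurableD.
- by move=> F mF; exact: bigcup_measurable.
Qed.
Arguments sigma_sub {d T D G}.
Arguments sigma_pre {d T U G D}.

Section Model.
Context (R : realType) (d : measure_display) (Omega : measurableType d)
  (P : probability Omega R) (m n du : nat) (T : R)
  (w : R -> Omega -> 'rV[R]_m) (Uset : set 'rV[R]_du)
  (X : 'rV[R]_n -> @ctrl R d Omega du -> R -> Omega -> 'rV[R]_n)
  (Lam : 'rV[R]_n -> R) (g : R -> 'rV[R]_n -> 'rV[R]_du -> R).

Lemma UF_U0 x u : (forall A : set Omega, measurable A <-> filt P w T A) -> (0 <= T)%R ->
  UF P T w Uset X x u -> U0 T Uset u.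
Proof.
move=> hF T0 [HU [Hp _]]; split => // j mD Y mY.
have h1 : (0 <= T <= T)%R by rewrite T0 lexx.
refine (sigma_sub mD _ _ (Hp T h1 j Y mY)).
move=> C [A [D' [mA [_ [FD ->]]]]]; apply: measurableX => //; exact/hF.
Qed.

Let D0 := (`[0%R, T] `*` [set: Omega]).
Let mD0 : measurable D0.
Proof. exact: measurableX. Qed.

Lemma meas_Lam x u : (0 <= T)%R ->
  (forall i : 'I_n, measurable_fun D0 (fun p : R * Omega => X x u p.1 p.2 ord0 i)) ->
  (forall B : set R, measurable B -> @borel_rV R n (Lam @^-1` B)) ->
  measurable_fun setT (fun om => (Lam (X x u T om))%:E).
Proof.
move=> T0 hXu hLam.
apply/measurable_EFinP => _ Y mY.
refine (sigma_pre (fun om => X x u T om) measurableT _ _ (hLam Y mY)).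
move=> A [i [B [mB ->]]].
have -> : [set: Omega] `&` (fun om => X x u T om) @^-1` ((fun v : 'rV[R]_n => v ord0 i) @^-1` B)
  = xsection (D0 `&` (fun p : R * Omega => X x u p.1 p.2 ord0 i) @^-1` B) T.
  apply/seteqP; split => om /=; rewrite /xsection /= inE /=.
    by move=> [_ HB]; split => //; split => //=; rewrite in_itv /= T0 lexx.
  by move=> [_ HB].
apply: measurable_xsection; exact: hXu.
Qed.

Lemma meas_G x u :
  (forall i : 'I_n, measurable_fun D0 (fun p : R * Omega => X x u p.1 p.2 ord0 i)) ->
  (forall j : 'I_du, measurable_fun D0 (fun p : R * Omega => u p.1 p.2 ord0 j)) ->
  (forall B : set R, measurable B ->
     @borel_trip R n du ((fun p : R * ('rV[R]_n * 'rV[R]_du) => g p.1 p.2.1 p.2.2) @^-1` B)) ->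
  measurable_fun D0 (fun p : R * Omega => g p.1 (X x u p.1 p.2) (u p.1 p.2)).
Proof.
move=> hXu huj hg _ Y mY.
refine (sigma_pre (fun p : R * Omega => (p.1, (X x u p.1 p.2, u p.1 p.2))) mD0 _ _ (hg Y mY)).
move=> A [B [mB [->|[[i ->]|[j ->]]]]].
- have h := @measurable_fst _ _ _ Omega measurableT B mB; rewrite setTI in h.
  exact: measurableI mD0 h.
- exact: hXu i mD0 B mB.
- exact: huj j mD0 B mB.
Qed.

Lemma meas_int x u :
  (forall i : 'I_n, measurable_fun D0 (fun p : R * Omega => X x u p.1 p.2 ord0 i)) ->
  (forall j : 'I_du, measurable_fun D0 (fun p : R * Omega => u p.1 p.2 ord0 j)) ->
  (forall B : set R, measurable B ->
     @borel_trip R n du ((fun p : R * ('rV[R]_n * 'rV[R]_du) => g p.1 p.2.1 p.2.2) @^-1` B)) ->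
  measurable_fun setT (fun om =>
    \int[lebesgue_measure]_(t in tint T) (g t (X x u t om) (u t om))%:E).
Proof.
move=> hXu huj hg.
have mG := @meas_G x u hXu huj hg.
pose F := (fun p : R * Omega => (g p.1 (X x u p.1 p.2) (u p.1 p.2))%:E) \_ D0.
have mF : measurable_fun setT F.
  apply/(measurable_restrictT _ _).1 => //; exact/measurable_EFinP.
have -> : (fun om => \int[lebesgue_measure]_(t in tint T) (g t (X x u t om) (u t om))%:E)
  = (fun om => \int[lebesgue_measure]_t (F^\+ (t, om)) - \int[lebesgue_measure]_t (F^\- (t, om))).
  apply/funext => om; rewrite integral_mkcond integralE.
  have Hin t : ((t, om) \in D0) = (t \in tint T).
    by apply/idP/idP; rewrite !inE /= /D0 /tint; [case|move=> ?; split].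
  congr (_ - _); apply: eq_integral => t _;
    by rewrite ?funeposE ?funenegE /F /patch /= Hin.
apply: emeasurable_funB.
  exact: (@measurable_fun_fubini_tonelli_G _ _ _ _ _ lebesgue_measure (F^\+) (measurable_funepos mF) (funepos_ge0 F)).
exact: (@measurable_fun_fubini_tonelli_G _ _ _ _ _ lebesgue_measure (F^\-) (measurable_funeneg mF) (funeneg_ge0 F)).
Qed.

End Model.

Arguments meas_Lam {R d Omega n du T X Lam x u}.
Arguments meas_int {R d Omega n du T X g x u}.
Arguments UF_U0 {R d Omega P m n du T w Uset X x u}.
Arguments int_le_sub {d T R mu r hf}.
Arguments le_int_any {d T R mu f g}.
Local Close Scope ereal_scope.
Local Open Scope ring_scope.

Theorem proposition1
  (R : realType) (d : measure_display) (Omega : measurableType d)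
  (P : probability Omega R) (m n du : nat) (T : R)
  (w : R -> Omega -> 'rV[R]_m) (Uset : set 'rV[R]_du)
  (X : 'rV[R]_n -> ctrl du -> R -> Omega -> 'rV[R]_n)
  (Lam : 'rV[R]_n -> R) (g : R -> 'rV[R]_n -> 'rV[R]_du -> R)
  (CL Cg : R) (cL cg : nat)
  (h : ctrl du -> (R -> 'rV[R]_m) -> R) :
  0 < T ->
  brownian_motion P T w ->
  (forall A : set Omega, measurable A <-> filt P w T A) ->
  (forall x u, U0 T Uset u ->
     (forall om, X x u 0 om = x) /\
     forall i : 'I_n, measurable_fun (`[0, T] `*` [set: Omega])
                        (fun p : R * Omega => X x u p.1 p.2 ord0 i)) ->
  (forall B : set R, measurable B -> @borel_rV R n (Lam @^-1` B)) ->
  (forall B : set R, measurable B ->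
     @borel_trip R n du ((fun p : R * ('rV[R]_n * 'rV[R]_du) => g p.1 p.2.1 p.2.2) @^-1` B)) ->
  (forall y, `|Lam y| <= CL * (1 + vnorm y ^+ cL)) ->
  (forall t y v, `|g t y v| <= Cg * (1 + vnorm y ^+ cg + vnorm v ^+ cg)) ->
  dual_feasible P T w Uset X h ->
  forall x : 'rV[R]_n,
    (ereal_sup [set Jval P T Lam g X x u | u in UF P T w Uset X x] <=
     \int[P]_om ereal_sup
        [set (reward T Lam g X x u om - (h u (fun t => w t om))%:E)%E | u in U0 T Uset])%E.

Proof.
move=> T0 _ hF hX hLam hg _ _ hdual x.
apply: ge_ereal_sup => _ [u uUF <-].
have u0 : U0 T Uset u := UF_U0 hF (ltW T0) uUF.
have [hx0 hXu] := hX x u u0.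
have [_ huj] := u0.
have mr : measurable_fun setT (reward T Lam g X x u).
  have m1 : measurable_fun setT (fun om => (Lam (X x u T om))%:E).
    exact: (meas_Lam (ltW T0) hXu hLam).
  have m2 := meas_int hXu huj hg.
  exact: (emeasurable_funD m1 m2).
have [mh [hpos hle]] := hdual x u uUF.
rewrite /Jval; apply: (le_trans (int_le_sub mr mh hpos hle)).
apply: le_int_any => om; apply: ereal_sup_ubound.
by exists u.
Qed.
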